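(* For any ring $R$ (associative with identity), the matrix rings $M_2(R)$ and $M_3(R)$ are 2-clean.
   Context: A ring $S$ is 2-clean if every element of $S$ can be written as $e+u_1+u_2$ with $e=e^2\in S$ and $u_1,u_2$ units of $S$. *)

(* Defs.v *)
From mathcomp Require Import all_boot all_algebra.
Set Implicit Arguments. Unset Strict Implicit. Unset Printing Implicit Defensive.
Import GRing.Theory.
Local Open Scope ring_scope.

Definition is_unit (S : pzRingType) (u : S) : Prop :=
  exists v : S, u * v = 1 /\ v * u = 1.

Definition two_clean (S : pzRingType) : Prop :=
  forall a : S, exists e u1 u2 : S,
    e * e = e /\ is_unit u1 /\ is_unit u2 /\ a = e + u1 + u2.

(* Main.v *)
Require Import Defs.
From mathcomp Require Import all_boot all_algebra.
Set Implicit Arguments. Unset Strict Implicit. Unset Printing Implicit Defensive.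
Import GRing.Theory.
Local Open Scope ring_scope.

Lemma is_unitM (S : pzRingType) (u v : S) : is_unit u -> is_unit v -> is_unit (u * v).
Proof.
move=> [u' [h1 h2]] [v' [h3 h4]]; exists (v' * u'); split.
  by rewrite mulrA -(mulrA u) h3 mulr1 h1.
by rewrite mulrA -(mulrA v') h2 mulr1 h4.
Qed.

Section M.
Variable R : pzRingType.
Definition mx2 (a b c d : R) : 'M[R]_2 :=
  \matrix_(i, j) nth 0 (nth [::] [:: [:: a; b]; [:: c; d]] i) j.
Definition mx3 (a b c d e f g h k : R) : 'M[R]_3 :=
  \matrix_(i, j) nth 0 (nth [::] [:: [:: a; b; c]; [:: d; e; f]; [:: g; h; k]] i) j.

Lemma mx2E (A : 'M[R]_2) : A = mx2 (A 0 0) (A 0 1) (A 1 0) (A 1 1).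
Proof.
apply/matrixP => -[[|[|i]] Hi] -[[|[|j]] Hj] //; rewrite mxE /=;
  by congr (A _ _); apply: val_inj.
Qed.

Ltac simp := rewrite ?(mul0r,mulr0,mul1r,mulr1,add0r,addr0,mulN1r,mulrN1,opprK,mulNr,mulrN,addNr,subrr,oppr0,subr0,sub0r) //.
Ltac ent := apply/matrixP => -[[|[|[|i]]] Hi] -[[|[|[|j]]] Hj] //;
  rewrite -?mulmxE !mxE ?big_ord_recr ?big_ord0 /= ?mxE /=; simp.

Lemma two : two_clean 'M[R]_2.
Proof.
move=> A; rewrite [A]mx2E.
set a := A 0 0; set b := A 0 1; set c := A 1 0; set d := A 1 1.
set x := a - 1 - 1; set q := d - 1.
exists (mx2 1 (b + 1 - x * q) 0 0), (mx2 1 x 0 1 * mx2 0 (-1) 1 q), (mx2 1 0 (c - 1) 1).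
split; [ent| split; [apply: is_unitM; [exists (mx2 1 (-x) 0 1); split; ent | exists (mx2 q 1 (-1) 0); split; ent] | split; [exists (mx2 1 0 (-(c - 1)) 1); split; ent| ent]]].
- by rewrite /x [1 + _]addrC !subrK.
- by rewrite [-1 + _]addrC addrA subrK addrK.
- by rewrite addrC subrK.
- by rewrite /q subrK.
Qed.

Lemma mx3E (A : 'M[R]_3) : A = mx3 (A 0 0) (A 0 1) (A 0 2) (A 1 0) (A 1 1) (A 1 2) (A 2 0) (A 2 1) (A 2 2).
Proof.
apply/matrixP => -[[|[|[|i]]] Hi] -[[|[|[|j]]] Hj] //; rewrite mxE /=;
  by congr (A _ _); apply: val_inj.
Qed.

Lemma three : two_clean 'M[R]_3.
Proof.
move=> A; rewrite [A]mx3E.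
set a11 := A 0 0; set a12 := A 0 1; set a13 := A 0 2.
set a21 := A 1 0; set a22 := A 1 1; set a23 := A 1 2.
set a31 := A 2 0; set a32 := A 2 1; set a33 := A 2 2.
set p := a11 - 1 - 1; set s := a22 - 1; set z := a33 - 1; set y := a23 - s * z.
set l := a21 - 1; set n := a32 - 1.
exists (mx3 1 a12 (a13 - 1 - p * y) 0 0 0 0 0 0),
  (mx3 1 p 0 0 1 s 0 0 1 * mx3 0 0 1 1 0 y 0 1 z), (mx3 1 0 0 l 1 0 a31 n 1).
split; [ent| split; [apply: is_unitM; [exists (mx3 1 (-p) (p*s) 0 1 (-s) 0 0 1); split; ent | exists (mx3 (-y) 1 0 (-z) 0 1 1 0 0); split; ent] | split; [exists (mx3 1 0 0 (-l) 1 0 (n * l - a31) (-n) 1); split; ent| ent]]].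
- by rewrite addrC addrA subrK subrr.
- by rewrite addrAC subrK subrr.
- by rewrite /p [1 + _]addrC !subrK.
- by rewrite [1 + _]addrC addrA subrK subrK.
- by rewrite addrC subrK.
- by rewrite /s subrK.
- by rewrite /y subrK.
- by rewrite addrC subrK.
- by rewrite /z subrK.
Qed.
End M.

Theorem lemma3 (R : pzRingType) :
  two_clean 'M[R]_2 /\ two_clean 'M[R]_3.
Proof. by split; [apply: two | apply: three]. Qed.
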